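(* Let $X\subset\mathbb{R}^n$, $n\ge2$, be an open convex bounded domain, let $\alpha\in\mathbb{R}$ with $(n-2)\alpha+1\neq0$, let $\sigma>0$ be a (sufficiently smooth) conductivity on $X$ and let $u_1,\dots,u_n$ be (sufficiently smooth) solutions of $\nabla\cdot(\sigma\nabla u_i)=0$ in $X$. Set $S_i=\sigma^\alpha\nabla u_i$. Let $\Omega\subset X$ be open with $$\inf_{x\in\Omega}\det(S_1(x),\dots,S_n(x))\ge c_0>0.$$ Let $H(x)$ be the $n\times n$ matrix with entries $H_{ij}(x)=S_i(x)\cdot S_j(x)$, $H^{ij}$ the $(i,j)$ entry of $H^{-1}$, and $D(x)=\sqrt{\det H(x)}$. Then at every $x\in\Omega$, $F:=\nabla\log\sigma$ satisfies $$F=\frac{c_F}{D}\sum_{i,j=1}^n\big(\nabla(DH^{ij})\cdot S_i\big)S_j=c_F\Big(\nabla\log D+\sum_{i,j=1}^n(\nabla H^{ij}\cdot S_i)S_j\Big),\qquad c_F:=((n-2)\alpha+1)^{-1}.$$ *)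

(* Defs.v *)
From HB Require Import structures.
From mathcomp Require Import all_boot all_order all_algebra.
From mathcomp Require Import all_classical all_reals all_analysis.
Set Implicit Arguments. Unset Strict Implicit. Unset Printing Implicit Defensive.
Import Order.TTheory GRing.Theory Num.Theory.
Import numFieldNormedType.Exports.
Local Open Scope ring_scope.
Local Open Scope classical_set_scope.

Section Defs.
Variables (R : realType) (n : nat).
Notation V := 'rV[R]_n.

Definition partial (i : 'I_n) (f : V -> R) : V -> R :=
  fun x => 'D_(delta_mx 0 i) f x.

Definition grad (f : V -> R) (x : V) : V := \row_i partial i f x.

Definition divg (F : V -> V) (x : V) : R :=
  \sum_(i < n) partial i (fun y => F y 0 i) x.

Definition dotv (a b : V) : R := \sum_(k < n) a 0 k * b 0 k.

Fixpoint iterd (s : seq 'I_n) (f : V -> R) : V -> R :=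
  match s with
  | [::] => f
  | i :: s' => partial i (iterd s' f)
  end.

(* "sufficiently smooth": every iterated partial derivative is
   (Frechet) differentiable at every point of A (C^infinity on A) *)
Definition smooth_on (A : set V) (f : V -> R) : Prop :=
  forall (s : seq 'I_n) (x : V), A x -> differentiable (iterd s f) x.

End Defs.

(* Main.v *)
Require Import Defs.
From HB Require Import structures.
From mathcomp Require Import all_boot all_order all_algebra.
From mathcomp Require Import all_classical all_reals all_analysis.
Set Implicit Arguments. Unset Strict Implicit. Unset Printing Implicit Defensive.
Import Order.TTheory GRing.Theory Num.Theory.
Import numFieldNormedType.Exports.
Local Open Scope ring_scope.
Local Open Scope classical_set_scope.

From mathcomp Require Import fingroup perm ring lra.
Section Calc.
Variables (R : realType) (W : normedModType R).

Lemma shift_fun (f : W -> R) (v y : W) (s0 : R) :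
  (fun h : R => h^-1 *: (((fun s : R => f (s *: v + y)) \o shift s0) (h *: 1) - f (s0 *: v + y)))
  = (fun h : R => h^-1 *: ((f \o shift (s0 *: v + y)) (h *: v) - f (s0 *: v + y))).
Proof.
apply/funext => h /=; congr (_ *: (f _ - _)).
by rewrite [h *: 1]mulr1 scalerDl addrA.
Qed.

Lemma derivable_line (f : W -> R) (v y : W) (s0 : R) :
  derivable f (s0 *: v + y) v -> derivable (fun s : R => f (s *: v + y)) s0 1.
Proof. by rewrite /derivable -shift_fun. Qed.

Lemma derive_line (f : W -> R) (v y : W) (s0 : R) :
  'D_1 (fun s : R => f (s *: v + y)) s0 = 'D_v f (s0 *: v + y).
Proof. by rewrite /derive -shift_fun. Qed.

Lemma chain_rule (f : W -> R) (g : R -> R) (x v : W) :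
  derivable f x v -> derivable g (f x) 1 ->
  derivable (g \o f) x v /\ 'D_v (g \o f) x = 'D_1 g (f x) * 'D_v f x.
Proof.
move=> df dg.
have ex : x = 0 *: v + x by rewrite scale0r add0r.
have df1 : derivable (fun s : R => f (s *: v + x)) 0 1.
  by apply: derivable_line; rewrite -ex.
have dg' : derivable g ((fun s : R => f (s *: v + x)) 0) 1 by rewrite /= -ex.
split.
  apply/derivable1P; rewrite /=.
  apply/derivable1_diffP; apply: differentiable_comp.
    exact/derivable1_diffP.
  exact/derivable1_diffP.
rewrite {1}ex -derive_line.
rewrite -derive1E.
have -> : (fun s : R => (g \o f) (s *: v + x)) = g \o (fun s : R => f (s *: v + x)) by [].
rewrite derive1_comp // !derive1E derive_line -ex.
by [].
Qed.

End Calc.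
Section Combi.
Variables (R : realType) (V : normedModType R).
Implicit Types (f g : V -> R) (x v : V).

Lemma isd_cst (c : R) x v : is_derive x v (fun _ : V => c) 0.
Proof. exact: is_derive_cst. Qed.

Lemma isdD f g x v df dg : is_derive x v f df -> is_derive x v g dg ->
  is_derive x v (fun y => f y + g y) (df + dg).
Proof. by move=> h1 h2; exact: (is_deriveD h1 h2). Qed.

Lemma isdN f x v df : is_derive x v f df ->
  is_derive x v (fun y => - f y) (- df).
Proof. by move=> h1; exact: (is_deriveN h1). Qed.

Lemma isdM f g x v df dg : is_derive x v f df -> is_derive x v g dg ->
  is_derive x v (fun y => f y * g y) (f x * dg + g x * df).
Proof.
move=> h1 h2; have := is_deriveM h1 h2.
by [].
Qed.

Lemma isdV f x v df : f x != 0 -> is_derive x v f df ->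
  is_derive x v (fun y => (f y)^-1) (- (f x) ^- 2 * df).
Proof.
move=> fx [d1 d2]; split; first exact: derivableV.
by rewrite deriveV // d2.
Qed.

Lemma isd_ext f g x v df : f =1 g -> is_derive x v f df -> is_derive x v g df.
Proof. by move=> /funext ->. Qed.

Lemma isd_near f g x v df : (\near x, f x = g x) -> is_derive x v f df ->
  is_derive x v g df.
Proof. exact: near_eq_is_derive. Qed.

Lemma isd_unique f x v d1 d2 : is_derive x v f d1 -> is_derive x v f d2 -> d1 = d2.
Proof. by move=> [_ <-] [_ <-]. Qed.

Lemma isd_big (I : Type) (r : seq I) (P : pred I) (F : I -> V -> R) (dF : I -> R) x v :
  (forall i, P i -> is_derive x v (F i) (dF i)) ->
  is_derive x v (fun y => \sum_(i <- r | P i) F i y) (\sum_(i <- r | P i) dF i).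
Proof.
move=> h; elim: r => [|a r IH].
  by apply: (isd_ext (f := fun _ => 0)); [move=> y; rewrite big_nil|rewrite big_nil; exact: isd_cst].
rewrite big_cons; case: ifP => Pa.
  apply: (isd_ext (f := fun y => F a y + \sum_(i <- r | P i) F i y)).
    by move=> y; rewrite big_cons Pa.
  exact: isdD (h a Pa) IH.
by apply: (isd_ext _ IH) => y; rewrite big_cons Pa.
Qed.

Lemma isd_prod m (F : 'I_m -> V -> R) (dF : 'I_m -> R) x v :
  (forall i, is_derive x v (F i) (dF i)) ->
  is_derive x v (fun y => \prod_(i < m) F i y)
    (\sum_(k < m) \prod_(i < m) (if i == k then dF i else F i x)).
Proof.
elim: m F dF => [|m IH] F dF h.
  apply: (isd_ext (f := fun _ => 1)); first by move=> y; rewrite big_ord0.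
  by rewrite big_ord0; exact: isd_cst.
have := IH (fun i => F (widen_ord (leqnSn m) i)) (fun i => dF (widen_ord (leqnSn m) i)) (fun i => h _).
move=> /(isdM)/(_ (h ord_max)) H.
apply: (isd_ext (f := fun y => (\prod_(i < m) F (widen_ord (leqnSn m) i) y) * F ord_max y)).
  by move=> y; rewrite big_ord_recr.
suff -> : \sum_(k < m.+1) \prod_(i < m.+1) (if i == k then dF i else F i x) =
  (\prod_(i < m) F (widen_ord (leqnSn m) i) x) * dF ord_max +
  F ord_max x * \sum_(k < m) \prod_(i < m) (if i == k then dF (widen_ord (leqnSn m) i)
                                              else F (widen_ord (leqnSn m) i) x) by [].
rewrite big_ord_recr /= addrC; congr (_ + _).
  rewrite big_ord_recr /= eqxx; congr (_ * _); apply: eq_bigr => i _.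
  by rewrite (_ : (widen_ord (leqnSn m) i == ord_max) = false) //; apply/negbTE; rewrite -val_eqE /= neq_ltn ltn_ord.
rewrite big_distrr /=; apply: eq_bigr => k _.
rewrite big_ord_recr /= mulrC; congr (_ * _).
  by rewrite (_ : (ord_max == widen_ord (leqnSn m) k) = false) //; apply/negbTE; rewrite -val_eqE /= neq_ltn ltn_ord orbT.
Qed.

End Combi.
Section Det.
Variables (R : realType) (V : normedModType R).

Lemma isd_det m (M : V -> 'M[R]_m) (N : 'M[R]_m) x v :
  (forall i j, is_derive x v (fun y => M y i j) (N i j)) ->
  is_derive x v (fun y => \det (M y))
    (\sum_(k < m) \det (\matrix_(i, j) if i == k then N i j else M x i j)).
Proof.
move=> h.
have -> : \sum_(k < m) \det (\matrix_(i, j) if i == k then N i j else M x i j) =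
  \sum_(s : 'S_m) ((-1) ^+ s * \sum_(k < m) \prod_(i < m)
      (if i == k then N i (s i) else M x i (s i))).
  rewrite /determinant exchange_big /=; apply: eq_bigr => s _.
  rewrite big_distrr /=; apply: eq_bigr => k _; congr (_ * _).
  by apply: eq_bigr => i _; rewrite mxE; case: ifP.
apply: (isd_ext (f := fun y => \sum_(s : 'S_m) ((-1) ^+ s * \prod_(i < m) M y i (s i)))).
  by move=> y; rewrite /determinant.
apply: isd_big => s _.
have H := isd_prod (F := fun i y => M y i (s i)) (dF := fun i => N i (s i)) (fun i => h i (s i)).
have := isdM (isd_cst ((-1) ^+ s : R) x v) H.
by rewrite mulr0 addr0.
Qed.

Lemma det_rowrep m (A N : 'M[R]_m) k :
  \det (\matrix_(i, j) if i == k then N i j else A i j) = \sum_j N k j * cofactor A k j.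
Proof.
rewrite (expand_det_row _ k); apply: eq_bigr => j _; rewrite mxE eqxx; congr (_ * _).
rewrite /cofactor; congr (_ * \det _); apply/matrixP => i j'; rewrite !mxE.
by rewrite eq_sym (negbTE (neq_lift k i)).
Qed.

Lemma jacobi_tr m (A N : 'M[R]_m) :
  \sum_(k < m) \det (\matrix_(i, j) if i == k then N i j else A i j) = \tr (N *m \adj A).
Proof.
rewrite /mxtrace; apply: eq_bigr => k _; rewrite det_rowrep mxE; apply: eq_bigr => j _.
by rewrite mxE.
Qed.

Lemma isd_inv m (M : V -> 'M[R]_m) (N : 'M[R]_m) x v :
  (forall i j, is_derive x v (fun y => M y i j) (N i j)) ->
  (\forall y \near x, M y \in unitmx) ->
  forall i j, is_derive x v (fun y => invmx (M y) i j)
     (- (invmx (M x) *m N *m invmx (M x)) i j).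
Proof.
move=> h hu.
have hd : forall i j, derivable (fun y => invmx (M y) i j) x v.
  move=> i j.
  have hc : is_derive x v (fun y => \det (row' j (col' i (M y))))
     (\sum_(k < m.-1) \det (\matrix_(a, b) if a == k then (row' j (col' i N)) a b
                           else (row' j (col' i (M x))) a b)).
    by apply: isd_det => a b; rewrite !mxE; apply: (isd_ext _ (h _ _)) => y; rewrite !mxE.
  have hdet := isd_det (N := N) h.
  have hx : \det (M x) != 0.
    by have := nbhs_singleton hu; rewrite unitmxE unitfE.
  have H := isdM (isdV (f := fun y => \det (M y)) hx hdet) (isdM (isd_cst ((-1) ^+ (j + i) : R) x v) hc).
  suff hn : \forall y \near x, (\det (M y))^-1 * ((-1) ^+ (j + i) * \det (row' j (col' i (M y)))) = invmx (M y) i j.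
    by case: (isd_near hn H).
  near=> y; rewrite /invmx; have -> : M y \in unitmx by near: y.
  by rewrite !mxE /cofactor.
pose D := \matrix_(i, j) 'D_v (fun y => invmx (M y) i j) x.
have hD : forall i j, is_derive x v (fun y => invmx (M y) i j) (D i j).
  by move=> i j; rewrite mxE; exact: derivableP.
have hx : M x \in unitmx by exact: nbhs_singleton hu.
suff e : D *m M x = - (invmx (M x) *m N).
  have eD : D = - (invmx (M x) *m N *m invmx (M x)).
    by rewrite -[D]mulmx1 -(mulmxV hx) mulmxA e mulNmx.
  by move=> i j; have := hD i j; rewrite eD mxE.
apply/matrixP => i j; rewrite !mxE.
have h1 : forall k, is_derive x v (fun y => invmx (M y) i k * M y k j)
   (invmx (M x) i k * N k j + M x k j * D i k).
  by move=> k; exact: isdM (hD i k) (h k j).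
have H := @isd_big R V 'I_m (index_enum 'I_m) (fun _ => true) _ _ x v (fun k _ => h1 k).
have hn : \forall y \near x, \sum_(k < m) invmx (M y) i k * M y k j = (1%:M : 'M[R]_m) i j.
  near=> y; rewrite -(mulVmx (_ : M y \in unitmx)); last by near: y.
  by rewrite mxE.
have H0 := isd_unique (isd_near hn H) (isd_cst _ x v).
rewrite big_split /= in H0.
apply/eqP; rewrite -addr_eq0; apply/eqP; rewrite -[RHS]H0 addrC; congr (_ + _).
by apply: eq_bigr => k _; rewrite mulrC.
Unshelve. all: by end_near. Qed.
End Det.

Section Schwarz.
Variables (R : realType) (W : normedModType R).

Lemma isd_line (f : W -> R) (a y : W) (s : R) :
  differentiable f (s *: a + y) ->
  is_derive s 1 (fun s : R => f (s *: a + y)) ('D_a f (s *: a + y)).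
Proof.
move=> df; split; first by apply: derivable_line; exact: diff_derivable.
exact: derive_line.
Qed.

Lemma subDKr (x w : W) : x - (w + x) = - w.
Proof. by rewrite opprD addrCA subrr addr0. Qed.

Lemma schwarz_half (f : W -> R) (x a b : W) (eps : R) :
  0 < eps ->
  (\forall y \near x, differentiable f y) ->
  differentiable (fun y => 'D_a f y) x ->
  exists2 d, 0 < d & forall t, 0 < t -> t < d ->
    `| f (t *: a + (t *: b + x)) - f (t *: a + x) - f (t *: b + x) + f x
        - t ^+ 2 * 'D_b (fun y => 'D_a f y) x | <= 2 * eps * (`|a| + `|b|) * t ^+ 2.
Proof.
move=> e0 hf dg.
set g := fun y => 'D_a f y.
set L := 'd g x.
have [d1 d1p H1] : exists2 d, 0 < d & forall h, `|h| < d ->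
    `|g (h + x) - (g x + L h)| <= eps * `|h|.
  move: (diff_locally dg) => /eqaddoP /(_ eps e0) /nbhs_norm0P [d dp Hd].
  by exists d => // h hd; have := Hd h hd.
have [d2 d2p H2] : exists2 d, 0 < d & forall y, `|x - y| < d -> differentiable f y.
  by move/nbhs_normP: hf => [d dp Hd]; exists d => // y hy; apply: Hd.
set C := `|a| + `|b|.
have C0 : 0 <= C by rewrite addr_ge0.
set m := Num.min d1 d2.
have m0 : 0 < m by rewrite lt_min d1p d2p.
exists (m / (C + 1)); first by rewrite divr_gt0 // ltr_wpDl.
move=> t t0 tm.
have tC : t * C < m.
  rewrite ltr_pdivlMr ?ltr_wpDl // in tm.
  by nra.
have hnorm : forall s, 0 <= s <= t -> `|s *: a + t *: b| <= t * C /\ `|s *: a| <= t * C.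
  move=> s /andP [s0 st].
  have h1 : `|s *: a| <= t * `|a|.
    by rewrite normrZ ger0_norm // ler_wpM2r.
  have h2 : `|t *: b| = t * `|b| by rewrite normrZ ger0_norm // ltW.
  split.
    by rewrite (le_trans (ler_normD _ _)) // h2 /C mulrDr lerD2r.
  by rewrite (le_trans h1) // /C mulrDr lerDl mulr_ge0 // ltW.
have hdiff : forall s, 0 <= s <= t -> differentiable f (s *: a + (t *: b + x)) /\
                                     differentiable f (s *: a + x).
  move=> s hs; have [n1 n2] := hnorm s hs; split; apply: H2.
    rewrite addrA subDKr normrN.
    by apply: (le_lt_trans n1); apply: (lt_le_trans tC); rewrite ge_min lexx orbT.
  rewrite subDKr normrN.
  by apply: (le_lt_trans n2); apply: (lt_le_trans tC); rewrite ge_min lexx orbT.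
pose F1 := fun s : R => f (s *: a + (t *: b + x)).
pose F2 := fun s : R => f (s *: a + x).
pose df := fun s : R => 'D_a f (s *: a + (t *: b + x)) - 'D_a f (s *: a + x).
have hder : forall s, 0 <= s <= t -> is_derive s 1 (F1 - F2) (df s).
  move=> s hs; have [h1 h2] := hdiff s hs.
  exact: is_deriveB (isd_line h1) (isd_line h2).
have [c cin hc] : exists2 c, c \in `[0, t]%R & (F1 - F2) t - (F1 - F2) 0 = df c * (t - 0).
  apply: MVT_segment; first exact: ltW.
    by move=> s; rewrite in_itv /= => /andP [s0 st]; apply: hder; rewrite !ltW.
  apply: derivable_within_continuous => s; rewrite in_itv /= => hs.
  by have [] := hder s hs.
have hc' : 0 <= c <= t by move: cin; rewrite in_itv.
have hc2 : f (t*:a + (t*:b+x)) - f (t*:a + x) - (f (0*:a + (t*:b+x)) - f (0*:a + x)) = df c * (t - 0) := hc.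
rewrite !scale0r !add0r subr0 in hc2.
have eD : f (t *: a + (t *: b + x)) - f (t *: a + x) - f (t *: b + x) + f x = df c * t.
  by rewrite -hc2; lra.
have eL : 'D_b g x = L b by rewrite deriveE.
set h1 := c *: a + t *: b.
set h2 := c *: a.
have [n1 n2] := hnorm c hc'.
have k1 : `|g (h1 + x) - (g x + L h1)| <= eps * (t * C).
  by apply: (le_trans (H1 _ _)); [apply: (le_lt_trans n1); apply: (lt_le_trans tC); rewrite ge_min lexx | rewrite ler_wpM2l // ltW].
have k2 : `|g (h2 + x) - (g x + L h2)| <= eps * (t * C).
  by apply: (le_trans (H1 _ _)); [apply: (le_lt_trans n2); apply: (lt_le_trans tC); rewrite ge_min lexx | rewrite ler_wpM2l // ltW].
have eLh : L h1 = L h2 + t * L b.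
  by rewrite /h1 linearD [L (t *: b)]linearZ.
have edf : df c = (g (h1 + x) - (g x + L h1)) - (g (h2 + x) - (g x + L h2)) + t * L b.
  change (g (c *: a + (t *: b + x)) - g (c *: a + x) = g (h1 + x) - (g x + L h1) - (g (h2 + x) - (g x + L h2)) + t * L b).
  have -> : h1 + x = c *: a + (t *: b + x) by rewrite /h1 addrA.
  rewrite eLh; lra.
rewrite eD edf eL.
set E1 := g (h1 + x) - (g x + L h1).
set E2 := g (h2 + x) - (g x + L h2).
have -> : (E1 - E2 + t * L b) * t - t ^+ 2 * L b = (E1 - E2) * t by rewrite expr2; ring.
rewrite normrM (ger0_norm (ltW t0)).
have k3 := ler_normB E1 E2.
nra.
Qed.
End Schwarz.
Section Schwarz2.
Variables (R : realType) (W : normedModType R).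
Lemma schwarz (f : W -> R) (x a b : W) :
  (\forall y \near x, differentiable f y) ->
  differentiable (fun y => 'D_a f y) x -> differentiable (fun y => 'D_b f y) x ->
  'D_b (fun y => 'D_a f y) x = 'D_a (fun y => 'D_b f y) x.
Proof.
move=> hf da db.
apply/eqP; rewrite -subr_eq0 -normr_le0; apply/ler_addgt0Pr => e e0; rewrite add0r.
set C := `|a| + `|b|.
have C0 : 0 <= C by rewrite addr_ge0.
set eps := e / (4 * (C + 1)).
have eps0 : 0 < eps by rewrite divr_gt0 // mulr_gt0 // ltr_wpDl.
have [d1 d1p H1] := @schwarz_half R W f x a b eps eps0 hf da.
have [d2 d2p H2] := @schwarz_half R W f x b a eps eps0 hf db.
set t := Num.min d1 d2 / 2.
have t0 : 0 < t by rewrite divr_gt0 // lt_min d1p d2p.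
have tm : Num.min d1 d2 / 2 < Num.min d1 d2 by rewrite ltr_pdivrMr // ltr_pMr ?lt_min ?d1p ?d2p // ltr1n.
have td1 : t < d1 by apply: (lt_le_trans tm); rewrite ge_min lexx.
have td2 : t < d2 by apply: (lt_le_trans tm); rewrite ge_min lexx orbT.
have K1 := H1 t t0 td1.
have K2 := H2 t t0 td2.
rewrite [t *: b + (t *: a + x)]addrCA [`|b| + `|a|]addrC -/C in K2.
rewrite -/C in K1.
set D := f (t *: a + (t *: b + x)) - f (t *: a + x) - f (t *: b + x) + f x in K1.
have eD : f (t *: a + (t *: b + x)) - f (t *: b + x) - f (t *: a + x) + f x = D.
  by rewrite /D; ring.
rewrite eD in K2.
set A := 'D_b (fun y => 'D_a f y) x in K1 *.
set B := 'D_a (fun y => 'D_b f y) x in K2 *.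
have k3 : `|t ^+ 2 * (A - B)| <= `|D - t ^+ 2 * A| + `|D - t ^+ 2 * B|.
  have -> : t ^+ 2 * (A - B) = (D - t ^+ 2 * B) - (D - t ^+ 2 * A) by ring.
  by rewrite [leRHS]addrC ler_normB.
rewrite normrM ger0_norm ?exprn_ge0 ?(ltW t0) // in k3.
have t2 : 0 < t ^+ 2 by rewrite exprn_gt0.
have hC : 4 * eps * C <= e.
  have C1 : C + 1 != 0 by rewrite gt_eqF // ltr_wpDl.
  have -> : 4 * eps * C = e * (C / (C + 1)) by rewrite /eps; field.
  apply: ler_piMr; first exact: ltW.
  by rewrite ler_pdivrMr ?ltr_wpDl // mul1r lerDl.
have : t ^+ 2 * `|A - B| <= t ^+ 2 * (4 * eps * C).
  rewrite (_ : t ^+ 2 * (4 * eps * C) = 2 * eps * C * t ^+ 2 + 2 * eps * C * t ^+ 2).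
    exact: le_trans k3 (lerD K1 K2).
  ring.
rewrite ler_pM2l // => h; exact: le_trans h hC.
Qed.
End Schwarz2.
Section Core.
Variable R : realType.

Lemma sum_delta_r m (F : 'I_m -> R) (c : 'I_m) :
  \sum_a F a * (1%:M : 'M[R]_m) a c = F c.
Proof.
rewrite (bigD1 c) //= big1 ?addr0; first by rewrite mxE eqxx mulr1.
by move=> a /negbTE hac; rewrite mxE hac mulr0.
Qed.

Lemma sum_delta_l m (F : 'I_m -> R) (c : 'I_m) :
  \sum_a F a * (1%:M : 'M[R]_m) c a = F c.
Proof.
rewrite (bigD1 c) //= big1 ?addr0; first by rewrite mxE eqxx mulr1.
by move=> a; rewrite eq_sym => /negbTE hac; rewrite mxE hac mulr0.
Qed.

Lemma AtG m (A : 'M[R]_m) : A \in unitmx ->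
  A^T *m invmx (A *m A^T) = invmx A /\ invmx (A *m A^T) *m A = (invmx A)^T.
Proof.
move=> uA.
have uH : A *m A^T \in unitmx by rewrite unitmx_mul unitmx_tr uA.
have e1 : A^T *m invmx (A *m A^T) = invmx A.
  by rewrite -[LHS]mul1mx -(mulVmx uA) -!mulmxA (mulmxA A) mulmxV // mulmx1.
split => //.
have sG : (invmx (A *m A^T))^T = invmx (A *m A^T) by rewrite trmx_inv trmx_mul trmxK.
by rewrite -e1 trmx_mul sG trmxK.
Qed.

Lemma core m (A : 'M[R]_m) (Nf : 'I_m -> 'M[R]_m) (F : 'I_m -> R) (al : R) (c : 'I_m) :
  A \in unitmx ->
  (forall a i b, Nf a i b - Nf b i a = al * (F a * A i b - F b * A i a)) ->
  (forall i, \sum_a Nf a i a = (al - 1) * \sum_a F a * A i a) ->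
  \tr (invmx A *m Nf c) +
  \sum_i \sum_j (\sum_a (- (invmx (A *m A^T) *m (A *m (Nf a)^T + Nf a *m A^T)
                          *m invmx (A *m A^T))) i j * A i a) * A j c
   = ((m%:R - 2) * al + 1) * F c.
Proof.
move=> uA hsym hdiv.
set G := invmx (A *m A^T).
set B := invmx A.
have [e1 e2] := AtG uA; rewrite -/G -/B in e1 e2.
set X := fun a => - (G *m (A *m (Nf a)^T + Nf a *m A^T) *m G).
have eT : \sum_i \sum_j (\sum_a X a i j * A i a) * A j c = \sum_a (A^T *m X a *m A) a c.
  under [RHS]eq_bigr => a _ do rewrite mxE.
  under [RHS]eq_bigr => a _ do under eq_bigr => j _ do rewrite mxE big_distrl /=.
  have -> : \sum_i \sum_j (\sum_a X a i j * A i a) * A j c = \sum_i \sum_j \sum_a X a i j * A i a * A j c.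
    by apply: eq_bigr => i _; apply: eq_bigr => j _; rewrite big_distrl.
  under [RHS]eq_bigr => a _ do rewrite exchange_big.
  rewrite [RHS]exchange_big.
  under [RHS]eq_bigr => i _ do rewrite exchange_big.
  apply: eq_bigr => i _; apply: eq_bigr => j _; apply: eq_bigr => a _.
  by rewrite [A^T a i]mxE [X a i j * _]mulrC.
change (\tr (B *m Nf c) + \sum_i \sum_j (\sum_a X a i j * A i a) * A j c = ((m%:R - 2) * al + 1) * F c).
have eX : forall a, A^T *m X a *m A = - ((Nf a)^T *m B^T + B *m Nf a).
  move=> a; rewrite /X mulmxN mulNmx; congr (- _).
  rewrite !mulmxA e1 -(mulmxA _ G A) e2 mulmxDr mulmxDl !mulmxA (mulVmx uA) mul1mx.
  by rewrite -(mulmxA (B *m Nf a)) -[A^T *m B^T]trmx_mul (mulVmx uA) trmx1 mulmx1.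
rewrite eT; under eq_bigr => a _ do rewrite eX.
have t1 : \tr (B *m Nf c) = \sum_a \sum_i B a i * Nf c i a.
  by rewrite /mxtrace; apply: eq_bigr => a _; rewrite mxE.
have t2 : \sum_a (- ((Nf a)^T *m B^T + B *m Nf a)) a c =
   - (\sum_a \sum_i Nf a i a * B c i) - \sum_a \sum_i B a i * Nf a i c.
  rewrite -sumrN -sumrB; apply: eq_bigr => a _; rewrite !mxE opprD.
  by congr (- _ - _); apply: eq_bigr => i _; rewrite !mxE.
have BA : B *m A = 1%:M by rewrite mulVmx.
have s_sym : \sum_a \sum_i B a i * Nf c i a - \sum_a \sum_i B a i * Nf a i c
    = al * (m%:R * F c - F c).
  rewrite -sumrB.
  under eq_bigr => a _ do rewrite -sumrB.
  have E : forall a, \sum_i (B a i * Nf c i a - B a i * Nf a i c) =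
      al * (F c * (B *m A) a a - F a * (B *m A) a c).
    move=> a; rewrite !mxE [F c * _]mulr_sumr [F a * _]mulr_sumr -sumrB mulr_sumr; apply: eq_bigr => i _.
    by rewrite -mulrBr hsym; ring.
  under eq_bigr => a _ do rewrite E BA.
  rewrite -mulr_sumr sumrB sum_delta_r.
  under eq_bigr => a _ do rewrite mxE eqxx mulr1.
  by rewrite sumr_const card_ord mulr_natl.
have s_div : \sum_a \sum_i Nf a i a * B c i = (al - 1) * F c.
  rewrite exchange_big /=.
  under eq_bigr => i _ do rewrite -mulr_suml hdiv.
  transitivity (\sum_i \sum_a (al - 1) * F a * A i a * B c i).
    apply: eq_bigr => i _; rewrite mulr_sumr big_distrl; apply: eq_bigr => a _ /=; ring.
  transitivity ((al - 1) * \sum_a F a * (B *m A) c a); last by rewrite BA sum_delta_l.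
  rewrite exchange_big mulr_sumr; apply: eq_bigr => a _.
  rewrite mxE [F a * _]mulr_sumr mulr_sumr; apply: eq_bigr => i _; ring.
rewrite t1 t2.
have -> : forall x y z : R, x + (- y - z) = (x - z) - y by move=> x y z; ring.
rewrite s_sym s_div; ring.
Qed.
End Core.
Section Core1.
Variable R : realType.
Lemma core1 m (A : 'M[R]_m) (dG : 'I_m -> 'M[R]_m) (L : 'I_m -> R) (d : R) (c : 'I_m) :
  A \in unitmx -> d != 0 ->
  d^-1 * \sum_i \sum_j (\sum_a (d * dG a i j + invmx (A *m A^T) i j * (d * L a)) * A i a) * A j c
  = \sum_i \sum_j (\sum_a dG a i j * A i a) * A j c + L c.
Proof.
move=> uA d0.
have [e1 _] := AtG uA.
set G := invmx (A *m A^T) in e1 *.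
have -> : \sum_i \sum_j (\sum_a (d * dG a i j + G i j * (d * L a)) * A i a) * A j c
  = d * (\sum_i \sum_j (\sum_a dG a i j * A i a) * A j c)
    + d * (\sum_i \sum_j G i j * (\sum_a L a * A i a) * A j c).
  rewrite !mulr_sumr -big_split; apply: eq_bigr => i _.
  rewrite !mulr_sumr -big_split; apply: eq_bigr => j _.
  have -> : \sum_a (d * dG a i j + G i j * (d * L a)) * A i a =
     d * (\sum_a dG a i j * A i a) + d * G i j * (\sum_a L a * A i a).
    by rewrite !mulr_sumr -big_split; apply: eq_bigr => a _ /=; ring.
  simpl; ring.
have -> : \sum_i \sum_j G i j * (\sum_a L a * A i a) * A j c = L c.
  transitivity (\sum_a L a * (A^T *m G *m A) a c); last by rewrite e1 mulVmx // sum_delta_r.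
  transitivity (\sum_i \sum_j \sum_a L a * A i a * G i j * A j c).
    apply: eq_bigr => i _; apply: eq_bigr => j _.
    rewrite mulr_sumr big_distrl; apply: eq_bigr => a _ /=; ring.
  under [RHS]eq_bigr => a _ do rewrite mxE mulr_sumr.
  under [RHS]eq_bigr => a _ do under eq_bigr => j _ do rewrite mxE big_distrl mulr_sumr /=.
  under [RHS]eq_bigr => a _ do rewrite exchange_big.
  rewrite [RHS]exchange_big.
  under [RHS]eq_bigr => i _ do rewrite exchange_big.
  apply: eq_bigr => i _; apply: eq_bigr => j _; apply: eq_bigr => a _.
  rewrite [A^T a i]mxE; ring.
by rewrite -mulrDr mulKf.
Qed.
End Core1.
Section Assemble.
Variable R : realType.

Lemma nf_sym m (al s pw : R) (gs : 'I_m -> R) (p : 'I_m -> 'I_m -> R)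
  (Q : 'I_m -> 'I_m -> 'I_m -> R) (Nf : 'I_m -> 'M[R]_m) (A : 'M[R]_m) :
  (forall i a b, Q i a b = Q i b a) ->
  (forall a i b, Nf a i b = al * (pw / s) * gs a * p i b + pw * Q i a b) ->
  (forall i b, A i b = pw * p i b) ->
  forall a i b, Nf a i b - Nf b i a = al * ((s^-1 * gs a) * A i b - (s^-1 * gs b) * A i a).
Proof.
move=> hQ E1 eA a i b; rewrite !E1 !eA (hQ i b a); ring.
Qed.

Lemma nf_div m (al s pw : R) (gs : 'I_m -> R) (p : 'I_m -> 'I_m -> R)
  (Q : 'I_m -> 'I_m -> 'I_m -> R) (Nf : 'I_m -> 'M[R]_m) (A : 'M[R]_m) :
  s != 0 ->
  (forall a i b, Nf a i b = al * (pw / s) * gs a * p i b + pw * Q i a b) ->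
  (forall i b, A i b = pw * p i b) ->
  (forall i, \sum_b (s * Q i b b + p i b * gs b) = 0) ->
  forall i, \sum_a Nf a i a = (al - 1) * \sum_a (s^-1 * gs a) * A i a.
Proof.
move=> sne0 E1 eA hb i.
have h0 := hb i; rewrite big_split /= -mulr_sumr in h0.
set P := \sum_b p i b * gs b in h0.
set Qs := \sum_b Q i b b in h0.
have e1 : \sum_a Nf a i a = al * (pw / s) * P + pw * Qs.
  transitivity (\sum_a (al * (pw / s) * (p i a * gs a) + pw * Q i a a)).
    by apply: eq_bigr => a _; rewrite E1; ring.
  by rewrite big_split /= -!mulr_sumr.
have e2 : \sum_a (s^-1 * gs a) * A i a = s^-1 * pw * P.
  rewrite /P mulr_sumr; apply: eq_bigr => a _; rewrite eA; ring.
rewrite e1 e2.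
have e3 : pw * Qs = pw / s * (s * Qs) by rewrite mulrA divfK.
rewrite e3 (_ : s * Qs = - P); last by apply/eqP; rewrite -addr_eq0 h0.
ring.
Qed.

Lemma assemble m (A : 'M[R]_m) (Nf : 'I_m -> 'M[R]_m) (Fv : 'I_m -> R) (al : R)
  (L gD : 'rV[R]_m) (gG gDG : 'I_m -> 'I_m -> 'rV[R]_m) (Sr : 'I_m -> 'rV[R]_m)
  (Dx : R) (Hx : 'I_m -> 'I_m -> R) :
  A \in unitmx -> (m%:R - 2) * al + 1 != 0 ->
  (forall a i b, Nf a i b - Nf b i a = al * (Fv a * A i b - Fv b * A i a)) ->
  (forall i, \sum_a Nf a i a = (al - 1) * \sum_a Fv a * A i a) ->
  Dx = \det A ->
  (forall j c, Sr j 0 c = A j c) ->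
  (forall c, L 0 c = Fv c) ->
  (forall c, gD 0 c = Dx^-1 * \tr (Nf c *m \adj A)) ->
  (forall i j, Hx i j = invmx (A *m A^T) i j) ->
  (forall i j k, gG i j 0 k = (- (invmx (A *m A^T) *m (A *m (Nf k)^T + Nf k *m A^T)
                                   *m invmx (A *m A^T))) i j) ->
  (forall i j k, gDG i j 0 k = Dx * gG i j 0 k + Hx i j * \tr (Nf k *m \adj A)) ->
  L = (((m%:R - 2) * al + 1)^-1 / Dx) *: \sum_i \sum_j dotv (gDG i j) (Sr i) *: Sr j /\
  L = ((m%:R - 2) * al + 1)^-1 *: (gD + \sum_i \sum_j dotv (gG i j) (Sr i) *: Sr j).
Proof.
move=> uA hal hsym hdiv eDx eS eL egD eHx egG egDG.
have Dx0 : Dx != 0 by rewrite eDx -unitfE -unitmxE.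
have LB : forall c, Dx^-1 * \tr (Nf c *m \adj A) = \tr (invmx A *m Nf c).
  move=> c; rewrite /invmx uA -scalemxAl mxtraceZ mxtrace_mulC eDx.
  by [].
have hcore := fun c => @core R m A Nf Fv al c uA hsym hdiv.
set k := (m%:R - 2) * al + 1 in hal hcore *.
set T := fun c => \sum_i \sum_j (\sum_a gG i j 0 a * A i a) * A j c.
have eT : forall c, T c = \sum_i \sum_j (\sum_a (- (invmx (A *m A^T) *m (A *m (Nf a)^T + Nf a *m A^T)
                                   *m invmx (A *m A^T))) i j * A i a) * A j c.
  move=> c; rewrite /T; apply: eq_bigr => i _; apply: eq_bigr => j _; congr (_ * _).
  by apply: eq_bigr => a _; rewrite egG.
have key : forall c, \tr (invmx A *m Nf c) + T c = k * Fv c by move=> c; rewrite eT hcore.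
have edot : forall (v : 'I_m -> 'I_m -> 'rV[R]_m) c,
   (\sum_i \sum_j dotv (v i j) (Sr i) *: Sr j) 0 c = \sum_i \sum_j (\sum_a v i j 0 a * A i a) * A j c.
  move=> v c; rewrite summxE; apply: eq_bigr => i _; rewrite summxE; apply: eq_bigr => j _.
  rewrite mxE eS /dotv; congr (_ * _); apply: eq_bigr => a _; by rewrite eS.
split; apply/rowP => c.
  rewrite mxE edot eL.
  under eq_bigr => i _ do under eq_bigr => j _ do under eq_bigr => a _ do rewrite egDG egG eHx.
  have LB' : forall a, \tr (Nf a *m \adj A) = Dx * \tr (invmx A *m Nf a).
    by move=> a; rewrite -LB mulVKf.
  under eq_bigr => i _ do under eq_bigr => j _ do under eq_bigr => a _ do rewrite LB'.
  rewrite -mulrA (@core1 R m A (fun a => - (invmx (A *m A^T) *m (A *m (Nf a)^T + Nf a *m A^T)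
                                   *m invmx (A *m A^T))) (fun a => \tr (invmx A *m Nf a)) Dx c uA Dx0).
  by rewrite -eT addrC key mulKf.
rewrite mxE [X in _ * X]mxE edot egD LB eL.
change (Fv c = k^-1 * (\tr (invmx A *m Nf c) + T c)).
by rewrite key mulKf.
Qed.
End Assemble.

Lemma isd_val (R : realType) (V : normedModType R) (f : V -> R) x v d :
  is_derive x v f d -> 'D_v f x = d.
Proof. by case. Qed.

Lemma isd_ex (R : realType) (V W : normedModType R) (f : V -> W) x v d :
  is_derive x v f d -> derivable f x v.
Proof. by case. Qed.

Lemma mxNE (R : realType) m (M : 'M[R]_m) i j : (- M) i j = - M i j.
Proof. by rewrite mxE. Qed.

Section Alg.
Variable R : realType.
Lemma alg1 (X Y Z : R) : X + Y * Z = Z * Y + X. Proof. by rewrite addrC mulrC. Qed.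
Lemma alg_sym (al pw s ga gb pb pa q : R) :
  al * (pw / s) * ga * pb + pw * q - (al * (pw / s) * gb * pa + pw * q) =
  al * (s^-1 * ga * (pw * pb) - s^-1 * gb * (pw * pa)).
Proof. ring. Qed.
Lemma alg2 (k g pp w q : R) : k * g * pp + w * q = k * (pp * g) + w * q.
Proof. ring. Qed.
Lemma alg3 (si g w pp : R) : si * g * (w * pp) = si * w * (pp * g).
Proof. ring. Qed.
Lemma alg4 (al pw s P : R) : al * (pw / s) * P + pw / s * (- P) = (al - 1) * (s^-1 * pw * P).
Proof. ring. Qed.
End Alg.

Lemma isd_eqd (R : realType) (V : normedModType R) (f : V -> R) x v d1 d2 :
  is_derive x v f d1 -> d1 = d2 -> is_derive x v f d2.
Proof. by move=> h <-. Qed.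

Theorem lemma2p2 (R : realType) (n : nat) (hn : (2 <= n)%N)
  (X : set 'rV[R]_n) (hXo : open X) (hXc : convex_set X) (hXb : bounded_set X)
  (alpha : R) (halpha : (n%:R - 2) * alpha + 1 != 0)
  (sigma : 'rV[R]_n -> R) (hsig_pos : forall x, X x -> 0 < sigma x)
  (hsig_smooth : smooth_on X sigma)
  (u : 'I_n -> 'rV[R]_n -> R) (hu_smooth : forall i, smooth_on X (u i))
  (hu_eq : forall i x, X x -> divg (fun y => sigma y *: grad (u i) y) x = 0)
  (Omega : set 'rV[R]_n) (hOo : open Omega) (hOX : Omega `<=` X)
  (c0 : R) (hc0 : 0 < c0) :
  let S := fun (i : 'I_n) (x : 'rV[R]_n) => (sigma x `^ alpha) *: grad (u i) x in
  (forall x, Omega x -> c0 <= \det (\matrix_(i < n, j < n) S i x 0 j)) ->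
  let H := fun x : 'rV[R]_n => \matrix_(i < n, j < n) dotv (S i x) (S j x) in
  let Hinv := fun (i j : 'I_n) (x : 'rV[R]_n) => invmx (H x) i j in
  let D := fun x : 'rV[R]_n => Num.sqrt (\det (H x)) in
  let cF := ((n%:R - 2) * alpha + 1)^-1 in
  forall x, Omega x ->
    grad (fun y => ln (sigma y)) x
      = (cF / D x) *: \sum_(i < n) \sum_(j < n)
          dotv (grad (fun y => D y * Hinv i j y) x) (S i x) *: S j x
    /\
    grad (fun y => ln (sigma y)) x
      = cF *: (grad (fun y => ln (D y)) x
               + \sum_(i < n) \sum_(j < n)
                   dotv (grad (Hinv i j) x) (S i x) *: S j x).

Proof.
move=> S hdet H Hinv D cF x xO.
have xX : X x := hOX x xO.
have nO : \forall y \near x, Omega y := open_nbhs_nbhs (conj hOo xO).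
have nX : \forall y \near x, X y := open_nbhs_nbhs (conj hXo xX).
pose s := sigma x.
have s0 : 0 < s := hsig_pos x xX.
have sne0 : s != 0 by rewrite gt_eqF.
pose gs k := partial k sigma x.
pose p i k := partial k (u i) x.
pose Q i a b := partial a (fun y => partial b (u i) y) x.
pose pw := s `^ alpha.
pose Af y := \matrix_(i < n, j < n) S i y 0 j.
pose Nf a := \matrix_(i < n, b < n) (alpha * (pw / s) * gs a * p i b + pw * Q i a b).
have d_sig : forall a, is_derive x (delta_mx 0 a) sigma (gs a).
  move=> a; apply: derivableP; apply: diff_derivable.
  exact: (hsig_smooth [::] x xX).
have d_du : forall i b a, is_derive x (delta_mx 0 a) (fun y => partial b (u i) y) (Q i a b).
  move=> i b a; apply: derivableP; apply: diff_derivable.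
  exact: (hu_smooth i [:: b] x xX).
have epw : s `^ (alpha - 1) = pw / s.
  rewrite powRB ?powRr1 ?(ltW s0) //; apply/implyP => _; exact: sne0.
have d_pw : forall a, is_derive x (delta_mx 0 a) (fun y => sigma y `^ alpha) (alpha * (pw / s) * gs a).
  move=> a.
  have hp := is_derive1_powR alpha s0.
  have [c1 c2] := chain_rule (isd_ex (d_sig a)) (isd_ex hp).
  apply: isd_eqd; first exact: (DeriveDef c1 c2).
  by rewrite (isd_val hp) (isd_val (d_sig a)) epw.
have d_A : forall a i b, is_derive x (delta_mx 0 a) (fun y => Af y i b) (Nf a i b).
  move=> a i b; have h := isdM (d_pw a) (d_du i b a).
  apply: (isd_ext (f := fun y => sigma y `^ alpha * partial b (u i) y)).
    by move=> y; rewrite /Af /S !mxE.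
  by apply: isd_eqd h _; rewrite /Nf mxE; apply: alg1.
have eAm : forall i b, Af x i b = pw * p i b by move=> i b; rewrite /Af /S !mxE.
have E1 : forall a i b, Nf a i b = alpha * (pw / s) * gs a * p i b + pw * Q i a b.
  by move=> a i b; rewrite /Nf mxE.
have hQ : forall i a b, Q i a b = Q i b a.
  move=> i a b; rewrite /Q /partial.
  apply: schwarz.
  - by near=> y; apply: (hu_smooth i [::]); near: y.
  - exact: (hu_smooth i [:: b] x xX).
  - exact: (hu_smooth i [:: a] x xX).
have hb : forall i, \sum_b (s * Q i b b + p i b * gs b) = 0.
  move=> i; have h0 := hu_eq i x xX; rewrite /divg in h0; rewrite -[RHS]h0.
  apply: eq_bigr => b _; apply/esym/isd_val.
  apply: (isd_ext (f := fun y => sigma y * partial b (u i) y)).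
    by move=> y; rewrite !mxE.
  exact: isdM (d_sig b) (d_du i b b).
have d_lns : forall c, is_derive x (delta_mx 0 c) (fun y => ln (sigma y)) (s^-1 * gs c).
  move=> c.
  have hl : is_derive s 1 (@ln R) s^-1 by apply: is_derive1_ln.
  have [c1 c2] := chain_rule (isd_ex (d_sig c)) (isd_ex hl).
  apply: isd_eqd; first exact: (DeriveDef c1 c2).
  by rewrite (isd_val hl) (isd_val (d_sig c)).
have hsym := nf_sym hQ E1 eAm.
have hdiv := nf_div sne0 E1 eAm hb.
clear E1 hb hQ d_pw d_du epw eAm.
clearbody Nf.
have hdetA : forall y, Omega y -> c0 <= \det (Af y) by move=> y /hdet.
have uAm : Af x \in unitmx.
  by rewrite unitmxE unitfE gt_eqF // (lt_le_trans hc0 (hdetA x xO)).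
have nU : \forall y \near x, Af y \in unitmx.
  near=> y; rewrite unitmxE unitfE gt_eqF // (lt_le_trans hc0 (hdetA y _)) //; near: y; exact: nO.
have eH : forall y, H y = Af y *m (Af y)^T.
  move=> y; apply/matrixP => i j; rewrite !mxE /dotv; apply: eq_bigr => k _.
  by rewrite !mxE.
have eD : forall y, Omega y -> D y = \det (Af y).
  move=> y yO; rewrite /D eH det_mulmx det_tr -expr2 sqrtr_sqr ger0_norm //.
  exact: le_trans (ltW hc0) (hdetA y yO).
pose NH a := Af x *m (Nf a)^T + Nf a *m (Af x)^T.
have d_H : forall a i j, is_derive x (delta_mx 0 a) (fun y => (Af y *m (Af y)^T) i j) (NH a i j).
  move=> a i j.
  apply: (isd_ext (f := fun y => \sum_(k <- index_enum 'I_n | true) Af y i k * Af y j k)).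
    by move=> y; rewrite !mxE; apply: eq_bigr => k _; rewrite !mxE.
  apply: isd_eqd; first exact: isd_big (fun k _ => isdM (d_A a i k) (d_A a j k)).
  rewrite /NH !mxE big_split /=; congr (_ + _); apply: eq_bigr => k _; rewrite !mxE //.
  by rewrite mulrC.
have d_G : forall a i j, is_derive x (delta_mx 0 a) (Hinv i j)
    (- (invmx (Af x *m (Af x)^T) *m NH a *m invmx (Af x *m (Af x)^T)) i j).
  move=> a i j.
  have nUH : \forall y \near x, Af y *m (Af y)^T \in unitmx.
    near=> y; rewrite unitmx_mul unitmx_tr andbb; near: y; exact: nU.
  apply: (isd_ext (f := fun y => invmx (Af y *m (Af y)^T) i j)).
    by move=> y; rewrite /Hinv eH.
  exact: (@isd_inv R _ n (fun y => Af y *m (Af y)^T) (NH a) x (delta_mx 0 a) (d_H a) nUH i j).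
have d_D : forall a, is_derive x (delta_mx 0 a) D (\tr (Nf a *m \adj (Af x))).
  move=> a; rewrite -jacobi_tr.
  apply: (isd_near (f := fun y => \det (Af y))); last exact: isd_det (d_A a).
  by near=> y; rewrite eD //; near: y; exact: nO.
have Dx : D x = \det (Af x) := eD x xO.
have dA0 : 0 < \det (Af x) := lt_le_trans hc0 (hdetA x xO).
have d_lnD : forall a, is_derive x (delta_mx 0 a) (fun y => ln (D y)) ((D x)^-1 * \tr (Nf a *m \adj (Af x))).
  move=> a.
  have hl : is_derive (D x) 1 (@ln R) (D x)^-1 by apply: is_derive1_ln; rewrite Dx.
  have [c1 c2] := chain_rule (isd_ex (d_D a)) (isd_ex hl).
  apply: isd_eqd; first exact: (DeriveDef c1 c2).
  by rewrite (isd_val hl) (isd_val (d_D a)).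
apply: (@assemble R n (Af x) Nf (fun a => s^-1 * gs a) alpha
   (grad (fun y => ln (sigma y)) x) (grad (fun y => ln (D y)) x)
   (fun i j => grad (Hinv i j) x) (fun i j => grad (fun y => D y * Hinv i j y) x)
   (fun i => S i x) (D x) (fun i j => Hinv i j x)).
- exact: uAm.
- exact: halpha.
- exact: hsym.
- exact: hdiv.
- exact: Dx.
- by move=> j c; rewrite /Af [RHS]mxE.
- by move=> c; rewrite mxE; exact: isd_val (d_lns c).
- by move=> c; rewrite mxE; exact: isd_val (d_lnD c).
- by move=> i j; rewrite /Hinv eH.
- by move=> i j k; rewrite mxE mxNE; exact: isd_val (d_G k i j).
- move=> i j k; rewrite mxE [grad (Hinv i j) x 0 k]mxE /partial (isd_val (d_G k i j)).
  exact: isd_val (isdM (d_D k) (d_G k i j)).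
Unshelve. all: by end_near.
Qed.
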